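(* Let $\beta_2,\beta_3,\delta_1,\delta_2,\delta_3,\mu_1,\mu_2,\eta,K_1,K_2,K_3$ be positive real numbers and consider the system of ordinary differential equations \[ \begin{aligned} \dot{H} &= - \delta_1 H - \eta SH + \mu_1C\left(1-\frac{H}{K_1}\right), \\ \dot{S} &= \beta_2 S \left(1-\frac{S}{K_2}\right) - \delta_2 S - \eta S H + \mu_2 C \left(1-\frac{S}{K_2}\right), \\ \dot{C} &= \beta_3 C \left(1-\frac{C}{K_3}\right) - \delta_3 C + \eta S H \end{aligned} \] on $\mathbb{R}^3$. Let \[ \tilde{K}_3 := \frac{1}{2} \left( \frac{\beta_3 - \delta_3}{\beta_3} K_3 + \sqrt{\left(\frac{\beta_3-\delta_3}{\beta_3}\right)^2 K_3^2 + 8\frac{\eta}{\beta_3} K_1 K_2K_3} \right) \] and $D=[0, K_1] \times [0, K_2] \times [0, \tilde{K}_3]$. Then $D$ is positively invariant under this system, i.e.\ every solution $(H,S,C)(t)$ with $(H,S,C)(0)\in D$ satisfies $(H,S,C)(t)\in D$ for all $t\ge 0$ in its interval of existence.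
   Context: The system is a population model (mycobiont host $H$, photobiont symbiont $S$, lichen complex $C$) in which all parameters are birth, death, formation rates and carrying capacities. *)

(* Defs.v *)
From Stdlib Require Import Reals Lra.
Open Scope R_scope.

Definition fH (d1 eta m1 K1 : R) (H S C : R) : R :=
  - d1 * H - eta * S * H + m1 * C * (1 - H / K1).

Definition fS (b2 d2 eta m2 K2 : R) (H S C : R) : R :=
  b2 * S * (1 - S / K2) - d2 * S - eta * S * H + m2 * C * (1 - S / K2).

Definition fC (b3 d3 eta K3 : R) (H S C : R) : R :=
  b3 * C * (1 - C / K3) - d3 * C + eta * S * H.

Definition Ktilde3 (b3 d3 eta K1 K2 K3 : R) : R :=
  / 2 * ((b3 - d3) / b3 * K3
         + sqrt (((b3 - d3) / b3) ^ 2 * K3 ^ 2 + 8 * (eta / b3) * K1 * K2 * K3)).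

Definition inD (K1 K2 Kt3 : R) (h s c : R) : Prop :=
  0 <= h <= K1 /\ 0 <= s <= K2 /\ 0 <= c <= Kt3.

(* Main.v *)
Require Import Defs.
From Stdlib Require Import Reals Lra.
Open Scope R_scope.

Definition nm (x:R) := Rmin x 0.
Definition q (x:R) := (nm x)^2.

Lemma q_taylor x y : Rabs (q y - q x - 2 * nm x * (y - x)) <= (y - x)^2.
Proof.
  unfold q, nm, Rmin.
  destruct (Rle_dec x 0); destruct (Rle_dec y 0); apply Rabs_le; split; pose proof (pow2_ge_0 (y-x)); nra.
Qed.

Lemma q_deriv x : derivable_pt_lim q x (2 * nm x).
Proof.
  intros eps Heps. exists (mkposreal eps Heps). intros h Hh Hlt. simpl in Hlt.
  pose proof (q_taylor x (x + h)) as T.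
  replace (x + h - x) with h in T by ring.
  replace ((q (x + h) - q x) / h - 2 * nm x) with ((q (x + h) - q x - 2 * nm x * h) / h)
    by (field; auto).
  unfold Rdiv; rewrite Rabs_mult, Rabs_inv.
  apply Rle_lt_trans with (Rabs h).
  - apply Rmult_le_reg_r with (Rabs h). apply Rabs_pos_lt; auto.
    rewrite Rmult_assoc, Rinv_l by (apply Rabs_no_R0; auto).
    replace (Rabs h * Rabs h) with (h^2). lra.
    rewrite <- Rabs_mult. rewrite Rabs_right. ring. nra.
  - auto.
Qed.

Lemma q_comp f t l : derivable_pt_lim f t l ->
  derivable_pt_lim (fun u => q (f u)) t (2 * nm (f t) * l).
Proof.
  intro D. apply (derivable_pt_lim_comp f q t l (2 * nm (f t)) D (q_deriv _)).
Qed.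

Lemma q_comp' K f t l : derivable_pt_lim f t l ->
  derivable_pt_lim (fun u => q (K - f u)) t (2 * nm (K - f t) * (- l)).
Proof.
  intro D. apply (q_comp (fun u => K - f u)).
  replace (-l) with (0 - l) by ring.
  apply (derivable_pt_lim_minus (fct_cte K) f t 0 l); auto. apply derivable_pt_lim_const.
Qed.

Lemma dplus f g t l1 l2 : derivable_pt_lim f t l1 -> derivable_pt_lim g t l2 ->
  derivable_pt_lim (fun u => f u + g u) t (l1 + l2).
Proof. intros; apply (derivable_pt_lim_plus f g); auto. Qed.

Lemma cont_of f t l : derivable_pt_lim f t l -> continuity_pt f t.
Proof. intro D. apply derivable_continuous_pt. exists l. exact D. Qed.

Lemma nm_neg x : x <= 0 -> nm x = x.
Proof. intro; unfold nm, Rmin; destruct Rle_dec; lra. Qed.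
Lemma nm_pos x : 0 <= x -> nm x = 0.
Proof. intro; unfold nm, Rmin; destruct Rle_dec; lra. Qed.
Lemma q_ge0 x : 0 <= q x.
Proof. unfold q; apply pow2_ge_0. Qed.
Lemma q_neg x : x <= 0 -> q x = x*x.
Proof. intro; unfold q; rewrite nm_neg; auto; ring. Qed.
Lemma q_pos x : 0 <= x -> q x = 0.
Proof. intro; unfold q; rewrite nm_pos; auto; ring. Qed.

Definition Vf K1 K2 Kt h s c := q h + q (K1 - h) + q s + q (K2 - s) + q c + q (Kt - c).

Lemma prod_sq x y : x * y <= x*x + y*y.
Proof. nra. Qed.
Lemma scale_le k Q z : k <= Q -> 0 <= z -> k * z <= Q * z.
Proof. intros; apply Rmult_le_compat_r; auto. Qed.
Lemma div_bound h K M : 0 < K -> -M <= h <= M -> -(M/K) <= h / K <= M / K.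
Proof.
  intros hK [a b]. unfold Rdiv. pose proof (Rinv_0_lt_compat K hK).
  split; nra.
Qed.

Ltac Vpos := unfold Vf; repeat match goal with |- context [q ?x] =>
  let H := fresh in assert (H := q_ge0 x); revert H; generalize (q x); intros end.

Lemma negmul a b : a <= 0 -> 0 <= b -> a * b <= 0.
Proof. intros; assert (0 <= -a * b) by (apply Rmult_le_pos; lra); lra. Qed.

Lemma term1 d1 eta m1 K1 K2 Kt M Q h s c :
  0 < d1 -> 0 < eta -> 0 < m1 -> 0 < K1 -> 0 <= Q ->
  -M <= h <= M -> -M <= s <= M -> -M <= c <= M ->
  d1 + eta * M <= Q -> m1 * (1 + M / K1) <= Q ->
  nm h * fH d1 eta m1 K1 h s c <= 4 * Q * Vf K1 K2 Kt h s c.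
Proof.
  intros hd he hm hK hQ bh bs bc Q1 Q2.
  assert (hV : q h + q c <= Vf K1 K2 Kt h s c)
    by (unfold Vf; pose proof (q_ge0 (K1-h)); pose proof (q_ge0 (K2-s)); pose proof (q_ge0 s);
        pose proof (q_ge0 (Kt-c)); lra).
  assert (0 <= Q * Vf K1 K2 Kt h s c) by (apply Rmult_le_pos; auto; pose proof (q_ge0 h); pose proof (q_ge0 c); lra).
  destruct (Rle_dec h 0) as [hn|hp].
  2: { rewrite nm_pos by lra. lra. }
  rewrite nm_neg by lra. unfold fH. rewrite (q_neg h) in hV by lra.
  pose proof (div_bound h K1 M hK bh) as [dh1 dh2].
  assert (h / K1 <= 0) by (unfold Rdiv; apply negmul; [lra| apply Rlt_le, Rinv_0_lt_compat; lra]).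
  set (A := 1 - h / K1) in *.
  assert (hA : 1 <= A <= 1 + M / K1) by (unfold A; lra).
  assert (T1 : h * (- d1 * h - eta * s * h) <= Q * (h*h)).
  { assert (0 <= (Q + d1 + eta * s) * (h*h)) by (apply Rmult_le_pos; nra). nra. }
  assert (T2 : h * (m1 * c * A) <= Q * (h*h + q c)).
  { destruct (Rle_dec c 0).
    - rewrite q_neg by lra.
      replace (h * (m1 * c * A)) with ((m1 * A) * (h * c)) by ring.
      assert (m1 * A <= Q) by nra.
      assert (0 <= h*c) by nra.
      pose proof (scale_le (m1*A) Q (h*c)). pose proof (prod_sq h c).
      assert (Q * (h*c) <= Q * (h*h+c*c)) by (apply Rmult_le_compat_l; lra). lra.
    - rewrite q_pos by lra.
      assert (h * (m1 * c * A) <= 0).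
      { replace (h * (m1 * c * A)) with (h * (m1 * A * c)) by ring.
        apply negmul; [lra|]. apply Rmult_le_pos; [nra|lra]. }
      assert (0 <= Q * (h*h+0)) by (apply Rmult_le_pos; nra). lra. }
  assert (Q * (h*h) + Q*(h*h + q c) <= 4 * Q * Vf K1 K2 Kt h s c).
  { assert (Q * (h*h) + Q*(h*h + q c) <= 2 * Q * (h*h + q c)) by (pose proof (q_ge0 c); nra).
    assert (Q * (h*h + q c) <= Q * Vf K1 K2 Kt h s c) by (apply Rmult_le_compat_l; lra).
    lra. }
  replace (h * (- d1 * h - eta * s * h + m1 * c * A)) with
     (h * (- d1 * h - eta * s * h) + h * (m1 * c * A)) by ring.
  lra.
Qed.

Lemma Vf_ge0 K1 K2 Kt h s c : 0 <= Vf K1 K2 Kt h s c.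
Proof. unfold Vf; pose proof (q_ge0 h); pose proof (q_ge0 (K1-h)); pose proof (q_ge0 s);
  pose proof (q_ge0 (K2-s)); pose proof (q_ge0 c); pose proof (q_ge0 (Kt-c)); lra. Qed.

Lemma term2 d1 eta m1 K1 K2 Kt M Q h s c :
  0 < d1 -> 0 < eta -> 0 < m1 -> 0 < K1 -> 0 <= Q ->
  -M <= h <= M -> -M <= s <= M -> -M <= c <= M ->
  eta * M <= Q -> m1 * M / K1 <= Q ->
  nm (K1 - h) * (- fH d1 eta m1 K1 h s c) <= 4 * Q * Vf K1 K2 Kt h s c.
Proof.
  intros hd he hm hK hQ bh bs bc Q1 Q2.
  assert (hV : q (K1 - h) + q s <= Vf K1 K2 Kt h s c)
    by (unfold Vf; pose proof (q_ge0 h); pose proof (q_ge0 (K2-s)); pose proof (q_ge0 c);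
        pose proof (q_ge0 (Kt-c)); lra).
  assert (0 <= Q * Vf K1 K2 Kt h s c) by (apply Rmult_le_pos; auto; apply Vf_ge0).
  destruct (Rle_dec (K1 - h) 0) as [hn|hp].
  2: { rewrite nm_pos by lra. lra. }
  rewrite nm_neg by lra. unfold fH. rewrite (q_neg (K1 - h)) in hV by lra.
  set (p := h - K1) in *.
  assert (hp : 0 <= p) by (unfold p; lra).
  assert (hph : h = p + K1) by (unfold p; ring).
  assert (E : 1 - h / K1 = - (p / K1)) by (unfold p; field; lra).
  rewrite E.
  replace ((K1 - h) * - (- d1 * h - eta * s * h + m1 * c * - (p / K1))) with
    (p * (-d1 * h) + eta * h * (p * (-s)) + (m1 / K1) * (-c) * (p * p)) by (unfold p; field; lra).
  replace ((K1 - h) * (K1 - h)) with (p * p) in hV by (unfold p; ring).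
  assert (Ta : p * (-d1 * h) <= 0) by (assert (0 <= p * (d1*h)) by (apply Rmult_le_pos; nra); nra).
  assert (Tb : eta * h * (p * (-s)) <= Q * (p * p + q s)).
  { destruct (Rle_dec s 0).
    - rewrite q_neg by lra.
      assert (0 <= p * -s) by nra.
      assert (eta * h <= Q) by nra.
      pose proof (scale_le (eta*h) Q (p * -s)).
      pose proof (prod_sq p (-s)).
      assert (Q * (p * -s) <= Q * (p*p + s*s)) by (apply Rmult_le_compat_l; nra). nra.
    - rewrite q_pos by lra.
      assert (eta * h * (p * - s) <= 0) by (assert (0 <= (eta * h) * (p * s)) by (apply Rmult_le_pos; nra); nra).
      assert (0 <= Q * (p*p+0)) by (apply Rmult_le_pos; nra). lra. }
  assert (Tc : m1 / K1 * (-c) * (p * p) <= Q * (p * p)).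
  { apply scale_le; [|nra]. unfold Rdiv in *.
    assert (0 < / K1) by (apply Rinv_0_lt_compat; lra). assert (0 <= (m1 * / K1) * (M + c)) by (apply Rmult_le_pos; nra). nra. }
  assert (Q * (p*p + q s) + Q * (p*p) <= 4 * Q * Vf K1 K2 Kt h s c).
  { assert (Q * (p*p + q s) + Q * (p*p) <= 2 * Q * (p*p + q s)) by (pose proof (q_ge0 s); nra).
    assert (Q * (p*p + q s) <= Q * Vf K1 K2 Kt h s c) by (apply Rmult_le_compat_l; lra).
    lra. }
  lra.
Qed.

Lemma Kt_lemma b3 d3 eta K1 K2 K3 x : 0 < b3 -> 0 < eta -> 0 < K1 -> 0 < K2 -> 0 < K3 ->
  Ktilde3 b3 d3 eta K1 K2 K3 <= x ->
  b3 * x * (1 - x / K3) - d3 * x + eta * K1 * K2 <= - (eta * K1 * K2).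
Proof.
  intros hb he h1 h2 h3 hx. unfold Ktilde3 in hx.
  set (r := (b3 - d3) / b3 * K3) in *.
  set (D := ((b3 - d3) / b3) ^ 2 * K3 ^ 2 + 8 * (eta / b3) * K1 * K2 * K3) in *.
  assert (hr2 : ((b3 - d3) / b3) ^ 2 * K3 ^ 2 = r^2) by (unfold r; ring).
  assert (he' : 0 <= eta / b3) by (apply Rlt_le, Rdiv_lt_0_compat; auto).
  assert (hD : 0 <= D) by (unfold D; rewrite hr2; assert (0 <= eta/b3*K1*K2*K3) by
     (apply Rmult_le_pos; [apply Rmult_le_pos; [apply Rmult_le_pos|]|]; lra); pose proof (pow2_ge_0 r); nra).
  pose proof (sqrt_sqrt D hD) as hs. pose proof (sqrt_pos D) as hs0.
  set (sq := sqrt D) in *.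
  assert (key : 0 <= x^2 - r*x - 2*(eta/b3)*K1*K2*K3).
  { assert (E : x^2 - r*x - 2*(eta/b3)*K1*K2*K3 = (x - /2*(r+sq)) * (x - /2*(r+sq) + sq)).
    { assert (sq*sq = r^2 + 8 * (eta / b3) * K1 * K2 * K3) by (rewrite hs; unfold D; rewrite hr2; ring).
      nra. }
    rewrite E. apply Rmult_le_pos; lra. }
  assert (E2 : b3 * x * (1 - x / K3) - d3 * x + eta * K1 * K2 + eta*K1*K2
               = - (b3 / K3) * (x^2 - r*x - 2*(eta/b3)*K1*K2*K3)).
  { unfold r. field. lra. }
  assert (0 <= b3/K3 * (x^2 - r*x - 2*(eta/b3)*K1*K2*K3)).
  { apply Rmult_le_pos; auto. apply Rlt_le, Rdiv_lt_0_compat; auto. }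
  lra.
Qed.

Lemma sh_bound K1 K2 M h s : 0 < K1 -> 0 < K2 -> K1 <= M -> K2 <= M ->
  -M <= h <= M -> -M <= s <= M ->
  s * h - K1 * K2 <= M * (- nm (K1 - h) - nm (K2 - s) - nm s - nm h).
Proof.
  intros.
  destruct (Rle_dec h 0); [rewrite (nm_neg h), (nm_pos (K1-h)) by lra|rewrite (nm_pos h) by lra;
    destruct (Rle_dec (K1 - h) 0); [rewrite (nm_neg (K1-h)) by lra | rewrite (nm_pos (K1-h)) by lra]];
  (destruct (Rle_dec s 0); [rewrite (nm_neg s), (nm_pos (K2-s)) by lra|rewrite (nm_pos s) by lra;
    destruct (Rle_dec (K2 - s) 0); [rewrite (nm_neg (K2-s)) by lra | rewrite (nm_pos (K2-s)) by lra]]);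
  nra.
Qed.

Lemma term3 b2 d2 eta m2 K1 K2 Kt M Q h s c :
  0 < b2 -> 0 < d2 -> 0 < eta -> 0 < m2 -> 0 < K2 -> 0 <= Q ->
  -M <= h <= M -> -M <= s <= M -> -M <= c <= M ->
  b2 * (1 + M / K2) + eta * M <= Q -> m2 * (1 + M / K2) <= Q ->
  nm s * fS b2 d2 eta m2 K2 h s c <= 4 * Q * Vf K1 K2 Kt h s c.
Proof.
  intros hb hd he hm hK hQ bh bs bc Q1 Q2.
  assert (hV : q s + q c <= Vf K1 K2 Kt h s c)
    by (unfold Vf; pose proof (q_ge0 (K1-h)); pose proof (q_ge0 (K2-s)); pose proof (q_ge0 h);
        pose proof (q_ge0 (Kt-c)); lra).
  assert (0 <= Q * Vf K1 K2 Kt h s c) by (apply Rmult_le_pos; auto; apply Vf_ge0).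
  destruct (Rle_dec s 0) as [hn|hp].
  2: { rewrite nm_pos by lra. lra. }
  rewrite nm_neg by lra. unfold fS. rewrite (q_neg s) in hV by lra.
  pose proof (div_bound s K2 M hK bs) as [dh1 dh2].
  assert (s / K2 <= 0) by (unfold Rdiv; apply negmul; [lra| apply Rlt_le, Rinv_0_lt_compat; lra]).
  set (A := 1 - s / K2) in *.
  assert (hA : 1 <= A <= 1 + M / K2) by (unfold A; lra).
  assert (T1 : s * (b2 * s * A - d2 * s - eta * s * h) <= Q * (s*s)).
  { assert (b2 * A <= b2 * (1 + M/K2)) by (apply Rmult_le_compat_l; lra).
    assert (0 <= (Q - b2 * A + d2 + eta * h) * (s*s)) by (apply Rmult_le_pos; nra). nra. }
  assert (T2 : s * (m2 * c * A) <= Q * (s*s + q c)).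
  { destruct (Rle_dec c 0).
    - rewrite q_neg by lra.
      replace (s * (m2 * c * A)) with ((m2 * A) * (s * c)) by ring.
      assert (m2 * A <= Q) by nra.
      assert (0 <= s*c) by nra.
      pose proof (scale_le (m2*A) Q (s*c)). pose proof (prod_sq s c).
      assert (Q * (s*c) <= Q * (s*s+c*c)) by (apply Rmult_le_compat_l; lra). lra.
    - rewrite q_pos by lra.
      assert (s * (m2 * c * A) <= 0).
      { replace (s * (m2 * c * A)) with (s * (m2 * A * c)) by ring.
        apply negmul; [lra|]. apply Rmult_le_pos; [nra|lra]. }
      assert (0 <= Q * (s*s+0)) by (apply Rmult_le_pos; nra). lra. }
  assert (Q * (s*s) + Q*(s*s + q c) <= 4 * Q * Vf K1 K2 Kt h s c).
  { assert (Q * (s*s) + Q*(s*s + q c) <= 2 * Q * (s*s + q c)) by (pose proof (q_ge0 c); nra).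
    assert (Q * (s*s + q c) <= Q * Vf K1 K2 Kt h s c) by (apply Rmult_le_compat_l; lra).
    lra. }
  replace (s * (b2 * s * A - d2 * s - eta * s * h + m2 * c * A)) with
     (s * (b2 * s * A - d2 * s - eta * s * h) + s * (m2 * c * A)) by ring.
  lra.
Qed.

Lemma term4 b2 d2 eta m2 K1 K2 Kt M Q h s c :
  0 < b2 -> 0 < d2 -> 0 < eta -> 0 < m2 -> 0 < K2 -> 0 <= Q ->
  -M <= h <= M -> -M <= s <= M -> -M <= c <= M ->
  eta * M <= Q -> m2 * M / K2 <= Q ->
  nm (K2 - s) * (- fS b2 d2 eta m2 K2 h s c) <= 4 * Q * Vf K1 K2 Kt h s c.
Proof.
  intros hb hd he hm hK hQ bh bs bc Q1 Q2.
  assert (hV : q (K2 - s) + q h <= Vf K1 K2 Kt h s c)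
    by (unfold Vf; pose proof (q_ge0 s); pose proof (q_ge0 (K1-h)); pose proof (q_ge0 c);
        pose proof (q_ge0 (Kt-c)); lra).
  assert (0 <= Q * Vf K1 K2 Kt h s c) by (apply Rmult_le_pos; auto; apply Vf_ge0).
  destruct (Rle_dec (K2 - s) 0) as [hn|hp].
  2: { rewrite nm_pos by lra. lra. }
  rewrite nm_neg by lra. unfold fS. rewrite (q_neg (K2 - s)) in hV by lra.
  set (p := s - K2) in *.
  assert (hp : 0 <= p) by (unfold p; lra).
  assert (hps : s = p + K2) by (unfold p; ring).
  assert (E : 1 - s / K2 = - (p / K2)) by (unfold p; field; lra).
  rewrite E.
  replace ((K2 - s) * - (b2 * s * - (p / K2) - d2 * s - eta * s * h + m2 * c * - (p / K2))) with
    (- (b2 / K2) * s * (p * p) - d2 * s * p + eta * s * (p * (-h)) + (m2 / K2) * (-c) * (p * p))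
    by (unfold p; field; lra).
  replace ((K2 - s) * (K2 - s)) with (p * p) in hV by (unfold p; ring).
  assert (0 < / K2) by (apply Rinv_0_lt_compat; lra).
  assert (Ta : - (b2 / K2) * s * (p * p) - d2 * s * p <= 0).
  { assert (0 <= (b2 * / K2) * s * (p * p)) by (apply Rmult_le_pos; [apply Rmult_le_pos; nra|nra]).
    assert (0 <= d2 * s * p) by (apply Rmult_le_pos; nra). unfold Rdiv. lra. }
  assert (Tb : eta * s * (p * (-h)) <= Q * (p * p + q h)).
  { destruct (Rle_dec h 0).
    - rewrite q_neg by lra.
      assert (0 <= p * -h) by nra.
      assert (eta * s <= Q) by nra.
      pose proof (scale_le (eta*s) Q (p * -h)).
      pose proof (prod_sq p (-h)).
      assert (Q * (p * -h) <= Q * (p*p + h*h)) by (apply Rmult_le_compat_l; nra). nra.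
    - rewrite q_pos by lra.
      assert (eta * s * (p * - h) <= 0) by (assert (0 <= (eta * s) * (p * h)) by (apply Rmult_le_pos; apply Rmult_le_pos; lra); nra).
      assert (0 <= Q * (p*p+0)) by (apply Rmult_le_pos; nra). lra. }
  assert (Tc : m2 / K2 * (-c) * (p * p) <= Q * (p * p)).
  { apply scale_le; [|nra]. unfold Rdiv in *.
    assert (0 <= (m2 * / K2) * (M + c)) by (apply Rmult_le_pos; nra). nra. }
  assert (Q * (p*p + q h) + Q * (p*p) <= 4 * Q * Vf K1 K2 Kt h s c).
  { assert (Q * (p*p + q h) + Q * (p*p) <= 2 * Q * (p*p + q h)) by (pose proof (q_ge0 h); nra).
    assert (Q * (p*p + q h) <= Q * Vf K1 K2 Kt h s c) by (apply Rmult_le_compat_l; lra).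
    lra. }
  lra.
Qed.

Lemma term5 b3 d3 eta K1 K2 K3 Kt M Q h s c :
  0 < b3 -> 0 < d3 -> 0 < eta -> 0 < K3 -> 0 <= Q ->
  -M <= h <= M -> -M <= s <= M -> -M <= c <= M ->
  b3 * (1 + M / K3) <= Q -> eta * M <= Q ->
  nm c * fC b3 d3 eta K3 h s c <= 4 * Q * Vf K1 K2 Kt h s c.
Proof.
  intros hb hd he hK hQ bh bs bc Q1 Q2.
  assert (hV : q c + q s + q h <= Vf K1 K2 Kt h s c)
    by (unfold Vf; pose proof (q_ge0 (K1-h)); pose proof (q_ge0 (K2-s));
        pose proof (q_ge0 (Kt-c)); lra).
  assert (0 <= Q * Vf K1 K2 Kt h s c) by (apply Rmult_le_pos; auto; apply Vf_ge0).
  destruct (Rle_dec c 0) as [hn|hp].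
  2: { rewrite nm_pos by lra. lra. }
  rewrite nm_neg by lra. unfold fC. rewrite (q_neg c) in hV by lra.
  pose proof (div_bound c K3 M hK bc) as [dh1 dh2].
  assert (c / K3 <= 0) by (unfold Rdiv; apply negmul; [lra| apply Rlt_le, Rinv_0_lt_compat; lra]).
  set (A := 1 - c / K3) in *.
  assert (hA : 1 <= A <= 1 + M / K3) by (unfold A; lra).
  assert (T1 : c * (b3 * c * A - d3 * c) <= Q * (c*c)).
  { assert (b3 * A <= b3 * (1 + M/K3)) by (apply Rmult_le_compat_l; lra).
    assert (0 <= (Q - b3 * A + d3) * (c*c)) by (apply Rmult_le_pos; nra). nra. }
  pose proof (q_ge0 s); pose proof (q_ge0 h).
  assert (T2 : c * (eta * s * h) <= Q * (c*c + q s + q h)).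
  { assert (0 <= Q * (c*c + q s + q h)) by (apply Rmult_le_pos; nra).
    destruct (Rle_dec s 0); destruct (Rle_dec h 0).
    - assert (0 <= s*h) by nra. assert (0 <= eta*s*h) by (rewrite Rmult_assoc; apply Rmult_le_pos; lra).
      assert (c * (eta * s * h) <= 0) by (apply negmul; lra). lra.
    - rewrite q_neg by lra.
      replace (c * (eta * s * h)) with ((eta * h) * (c * s)) by ring.
      assert (eta * h <= Q) by nra. assert (0 <= c * s) by nra.
      pose proof (scale_le (eta*h) Q (c*s)). pose proof (prod_sq c s).
      assert (Q * (c*s) <= Q * (c*c+s*s)) by (apply Rmult_le_compat_l; lra).
      assert (0 <= Q * q h) by (apply Rmult_le_pos; lra). lra.
    - rewrite (q_neg h) by lra.
      replace (c * (eta * s * h)) with ((eta * s) * (c * h)) by ring.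
      assert (eta * s <= Q) by nra. assert (0 <= c * h) by nra.
      pose proof (scale_le (eta*s) Q (c*h)). pose proof (prod_sq c h).
      assert (Q * (c*h) <= Q * (c*c+h*h)) by (apply Rmult_le_compat_l; lra).
      assert (0 <= Q * q s) by (apply Rmult_le_pos; lra). lra.
    - assert (0 <= s*h) by nra. assert (0 <= eta*s*h) by (rewrite Rmult_assoc; apply Rmult_le_pos; lra).
      assert (c * (eta * s * h) <= 0) by (apply negmul; lra). lra. }
  assert (Q * (c*c) + Q*(c*c + q s + q h) <= 4 * Q * Vf K1 K2 Kt h s c).
  { assert (Q * (c*c) + Q*(c*c + q s + q h) <= 2 * Q * (c*c + q s + q h)) by nra.
    assert (Q * (c*c + q s + q h) <= Q * Vf K1 K2 Kt h s c) by (apply Rmult_le_compat_l; lra).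
    lra. }
  replace (c * (b3 * c * A - d3 * c + eta * s * h)) with
     (c * (b3 * c * A - d3 * c) + c * (eta * s * h)) by ring.
  lra.
Qed.

Lemma term6 b3 d3 eta K1 K2 K3 M Q h s c :
  0 < b3 -> 0 < d3 -> 0 < eta -> 0 < K1 -> 0 < K2 -> 0 < K3 -> 0 <= Q ->
  K1 <= M -> K2 <= M ->
  -M <= h <= M -> -M <= s <= M -> -M <= c <= M ->
  eta * M <= Q ->
  nm (Ktilde3 b3 d3 eta K1 K2 K3 - c) * (- fC b3 d3 eta K3 h s c)
    <= 4 * Q * Vf K1 K2 (Ktilde3 b3 d3 eta K1 K2 K3) h s c.
Proof.
  intros hb hd he h1 h2 hK hQ M1 M2 bh bs bc Q1.
  set (Kt := Ktilde3 b3 d3 eta K1 K2 K3) in *.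
  assert (0 <= Q * Vf K1 K2 Kt h s c) by (apply Rmult_le_pos; auto; apply Vf_ge0).
  destruct (Rle_dec (Kt - c) 0) as [hn|hp].
  2: { rewrite nm_pos by lra. lra. }
  rewrite nm_neg by lra.
  assert (G := Kt_lemma b3 d3 eta K1 K2 K3 c hb he h1 h2 hK ltac:(unfold Kt in hn; lra)).
  pose proof (sh_bound K1 K2 M h s h1 h2 M1 M2 bh bs) as SB.
  set (p := c - Kt).
  assert (hp : 0 <= p) by (unfold p; lra).
  unfold fC.
  replace ((Kt - c) * - (b3 * c * (1 - c / K3) - d3 * c + eta * s * h)) with
    (p * (b3 * c * (1 - c / K3) - d3 * c + eta * K1 * K2) + p * eta * (s * h - K1 * K2))
    by (unfold p; ring).
  assert (Ta : p * (b3 * c * (1 - c / K3) - d3 * c + eta * K1 * K2) <= 0).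
  { assert (0 <= eta * K1 * K2) by (apply Rmult_le_pos; [apply Rmult_le_pos|]; lra).
    assert (0 <= p * -(b3 * c * (1 - c / K3) - d3 * c + eta * K1 * K2)) by (apply Rmult_le_pos; lra).
    lra. }
  set (a1 := - nm (K1 - h)). set (a2 := - nm (K2 - s)). set (a3 := - nm s). set (a4 := - nm h).
  assert (E : q (K1 - h) + q (K2 - s) + q s + q h = a1*a1 + a2*a2 + a3*a3 + a4*a4)
    by (unfold a1, a2, a3, a4, q; ring).
  assert (hq : p * p <= q (Kt - c)) by (rewrite q_neg by lra; unfold p; nra).
  assert (hVV : p*p + a1*a1 + a2*a2 + a3*a3 + a4*a4 <= Vf K1 K2 Kt h s c)
    by (unfold Vf; pose proof (q_ge0 c); lra).
  assert (ha : 0 <= a1 /\ 0 <= a2 /\ 0 <= a3 /\ 0 <= a4).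
  { unfold a1, a2, a3, a4, nm. repeat split; apply Ropp_0_ge_le_contravar, Rle_ge;
    apply Rmin_r. }
  assert (Tb : p * eta * (s * h - K1 * K2) <= p * eta * M * (a1 + a2 + a3 + a4)).
  { replace (p * eta * M * (a1 + a2 + a3 + a4)) with (p * eta * (M * (- nm (K1 - h) - nm (K2 - s) - nm s - nm h)))
      by (unfold a1, a2, a3, a4; ring).
    apply Rmult_le_compat_l; [apply Rmult_le_pos; lra| exact SB]. }
  assert (Tc : p * (a1 + a2 + a3 + a4) <= 4 * (p*p + a1*a1 + a2*a2 + a3*a3 + a4*a4)).
  { pose proof (prod_sq p a1); pose proof (prod_sq p a2); pose proof (prod_sq p a3);
    pose proof (prod_sq p a4). nra. }
  assert (0 <= p * (a1 + a2 + a3 + a4)) by (apply Rmult_le_pos; lra).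
  assert (eta * M * (p * (a1 + a2 + a3 + a4)) <= Q * (p * (a1 + a2 + a3 + a4))) by (apply scale_le; lra).
  assert (Q * (p * (a1 + a2 + a3 + a4)) <= Q * (4 * (p*p + a1*a1 + a2*a2 + a3*a3 + a4*a4)))
    by (apply Rmult_le_compat_l; lra).
  assert (Q * (p*p + a1*a1 + a2*a2 + a3*a3 + a4*a4) <= Q * Vf K1 K2 Kt h s c)
    by (apply Rmult_le_compat_l; lra).
  replace (p * eta * M * (a1 + a2 + a3 + a4)) with (eta * M * (p * (a1 + a2 + a3 + a4))) in Tb by ring.
  lra.
Qed.

Lemma q0 x : q x <= 0 -> 0 <= x.
Proof. intro Hq. destruct (Rle_dec 0 x); auto. rewrite q_neg in Hq by lra. nra. Qed.

Lemma dexp L x : derivable_pt_lim (fun u => exp ((-L) * u)) x (exp ((-L) * x) * (-L)).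
Proof.
  apply (derivable_pt_lim_comp (mult_real_fct (-L) id) exp x (-L) (exp (-L * x))).
  - replace (-L) with (-L * 1) at 2 by ring. apply derivable_pt_lim_scal, derivable_pt_lim_id.
  - apply derivable_pt_lim_exp.
Qed.

Theorem theorem1
  (b2 b3 d1 d2 d3 m1 m2 eta K1 K2 K3 : R)
  (hb2 : 0 < b2) (hb3 : 0 < b3) (hd1 : 0 < d1) (hd2 : 0 < d2) (hd3 : 0 < d3)
  (hm1 : 0 < m1) (hm2 : 0 < m2) (heta : 0 < eta)
  (hK1 : 0 < K1) (hK2 : 0 < K2) (hK3 : 0 < K3)
  (H S C : R -> R) (a b : R) (ha : a < 0) (hb : 0 < b)
  (hode : forall t, a < t < b ->
     derivable_pt_lim H t (fH d1 eta m1 K1 (H t) (S t) (C t)) /\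
     derivable_pt_lim S t (fS b2 d2 eta m2 K2 (H t) (S t) (C t)) /\
     derivable_pt_lim C t (fC b3 d3 eta K3 (H t) (S t) (C t)))
  (h0 : inD K1 K2 (Ktilde3 b3 d3 eta K1 K2 K3) (H 0) (S 0) (C 0)) :
  forall t, 0 <= t < b ->
    inD K1 K2 (Ktilde3 b3 d3 eta K1 K2 K3) (H t) (S t) (C t).
Proof.
  intros T [T0 Tb].
  destruct (Req_dec T 0) as [->|HT0]; [exact h0|].
  assert (hT : 0 < T) by lra.
  set (Kt := Ktilde3 b3 d3 eta K1 K2 K3) in *.
  set (f := fun u => Rabs (H u) + Rabs (S u) + Rabs (C u)).
  destruct (continuity_ab_maj f 0 T ltac:(lra)) as [Mx [HMx _]].
  { intros u hu. destruct (hode u ltac:(lra)) as [dH [dS dC]].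
    unfold f. apply (continuity_pt_plus (fun u => Rabs (H u) + Rabs (S u)) (fun u => Rabs (C u))).
    apply (continuity_pt_plus (fun u => Rabs (H u)) (fun u => Rabs (S u))).
    all: apply (continuity_pt_comp _ Rabs); [eapply cont_of; eassumption| apply Rcontinuity_abs]. }
  set (M := 1 + K1 + K2 + f Mx).
  assert (hM : forall u, 0 <= u <= T -> (-M <= H u <= M) /\ (-M <= S u <= M) /\ (-M <= C u <= M)).
  { intros u hu. specialize (HMx u hu). unfold f in HMx.
    pose proof (Rabs_pos (H Mx)); pose proof (Rabs_pos (S Mx)); pose proof (Rabs_pos (C Mx)).
    pose proof (Rabs_pos (H u)); pose proof (Rabs_pos (S u)); pose proof (Rabs_pos (C u)).
    pose proof (Rle_abs (H u)); pose proof (Rle_abs (S u)); pose proof (Rle_abs (C u)).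
    pose proof (Rle_abs (- H u)); pose proof (Rle_abs (- S u)); pose proof (Rle_abs (- C u)).
    rewrite !Rabs_Ropp in *. unfold M, f. lra. }
  assert (hM0 : K1 <= M /\ K2 <= M /\ 0 <= M).
  { specialize (hM 0 ltac:(lra)). unfold M, f.
    pose proof (Rabs_pos (H Mx)); pose proof (Rabs_pos (S Mx)); pose proof (Rabs_pos (C Mx)). lra. }
  destruct hM0 as [MK1 [MK2 M0]].
  assert (p1 : 0 <= M / K1) by (apply Rlt_le, Rdiv_lt_0_compat; lra) || (unfold Rdiv; apply Rmult_le_pos; [lra| apply Rlt_le, Rinv_0_lt_compat; lra]).
  assert (p2 : 0 <= M / K2) by (unfold Rdiv; apply Rmult_le_pos; [lra| apply Rlt_le, Rinv_0_lt_compat; lra]).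
  assert (p3 : 0 <= M / K3) by (unfold Rdiv; apply Rmult_le_pos; [lra| apply Rlt_le, Rinv_0_lt_compat; lra]).
  assert (e1 : 0 <= eta * M) by (apply Rmult_le_pos; lra).
  assert (e2 : 0 <= m1 * (1 + M / K1)) by (apply Rmult_le_pos; lra).
  assert (e3 : 0 <= m1 * M / K1) by (unfold Rdiv; rewrite Rmult_assoc; apply Rmult_le_pos; lra).
  assert (e4 : 0 <= b2 * (1 + M / K2)) by (apply Rmult_le_pos; lra).
  assert (e5 : 0 <= m2 * (1 + M / K2)) by (apply Rmult_le_pos; lra).
  assert (e6 : 0 <= m2 * M / K2) by (unfold Rdiv; rewrite Rmult_assoc; apply Rmult_le_pos; lra).
  assert (e7 : 0 <= b3 * (1 + M / K3)) by (apply Rmult_le_pos; lra).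
  set (Q := d1 + eta * M + m1 * (1 + M / K1) + m1 * M / K1 + b2 * (1 + M / K2)
            + m2 * (1 + M / K2) + m2 * M / K2 + b3 * (1 + M / K3)).
  assert (hQ : 0 <= Q) by (unfold Q; lra).
  set (L := 48 * Q).
  set (Vt := fun u => Vf K1 K2 Kt (H u) (S u) (C u)).
  set (Vd := fun u =>
     2 * nm (H u) * fH d1 eta m1 K1 (H u) (S u) (C u)
   + 2 * nm (K1 - H u) * (- fH d1 eta m1 K1 (H u) (S u) (C u))
   + 2 * nm (S u) * fS b2 d2 eta m2 K2 (H u) (S u) (C u)
   + 2 * nm (K2 - S u) * (- fS b2 d2 eta m2 K2 (H u) (S u) (C u))
   + 2 * nm (C u) * fC b3 d3 eta K3 (H u) (S u) (C u)
   + 2 * nm (Kt - C u) * (- fC b3 d3 eta K3 (H u) (S u) (C u))).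
  assert (DV : forall u, a < u < b -> derivable_pt_lim Vt u (Vd u)).
  { intros u hu. destruct (hode u hu) as [dH [dS dC]].
    unfold Vt, Vd, Vf.
    repeat apply dplus.
    - apply q_comp; auto.
    - apply q_comp'; auto.
    - apply q_comp; auto.
    - apply q_comp'; auto.
    - apply q_comp; auto.
    - apply q_comp'; auto. }
  assert (VdL : forall u, 0 <= u <= T -> Vd u <= L * Vt u).
  { intros u hu. destruct (hM u hu) as [bh [bs bc]].
    unfold Vd, Vt, L.
    pose proof (term1 d1 eta m1 K1 K2 Kt M Q (H u) (S u) (C u) hd1 heta hm1 hK1 hQ bh bs bc
       ltac:(unfold Q; lra) ltac:(unfold Q; lra)).
    pose proof (term2 d1 eta m1 K1 K2 Kt M Q (H u) (S u) (C u) hd1 heta hm1 hK1 hQ bh bs bc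
       ltac:(unfold Q; lra) ltac:(unfold Q; lra)).
    pose proof (term3 b2 d2 eta m2 K1 K2 Kt M Q (H u) (S u) (C u) hb2 hd2 heta hm2 hK2 hQ bh bs bc
       ltac:(unfold Q; lra) ltac:(unfold Q; lra)).
    pose proof (term4 b2 d2 eta m2 K1 K2 Kt M Q (H u) (S u) (C u) hb2 hd2 heta hm2 hK2 hQ bh bs bc
       ltac:(unfold Q; lra) ltac:(unfold Q; lra)).
    pose proof (term5 b3 d3 eta K1 K2 K3 Kt M Q (H u) (S u) (C u) hb3 hd3 heta hK3 hQ bh bs bc
       ltac:(unfold Q; lra) ltac:(unfold Q; lra)).
    pose proof (term6 b3 d3 eta K1 K2 K3 M Q (H u) (S u) (C u) hb3 hd3 heta hK1 hK2 hK3 hQ MK1 MK2 bh bs bc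
       ltac:(unfold Q; lra)) as T6.
    fold Kt in T6. lra. }
  set (W := fun u => Vt u * exp ((-L) * u)).
  set (Wd := fun u => Vd u * exp ((-L) * u) + Vt u * (exp ((-L) * u) * (-L))).
  destruct (MVT_cor2 W Wd 0 T hT) as [c [Hc hc]].
  { intros u hu. unfold W, Wd.
    apply (derivable_pt_lim_mult Vt (fun u => exp ((-L) * u))).
    - apply DV; lra.
    - apply dexp. }
  assert (W0 : W 0 = 0).
  { unfold W, Vt, Vf. destruct h0 as [[? ?] [[? ?] [? ?]]].
    rewrite (q_pos (H 0)), (q_pos (K1 - H 0)), (q_pos (S 0)), (q_pos (K2 - S 0)),
      (q_pos (C 0)), (q_pos (Kt - C 0)) by lra. ring. }
  assert (Wdc : Wd c <= 0).
  { unfold Wd. pose proof (exp_pos ((-L) * c)). pose proof (VdL c ltac:(lra)).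
    replace (Vd c * exp (- L * c) + Vt c * (exp (- L * c) * - L)) with
      ((Vd c - L * Vt c) * exp (- L * c)) by ring.
    apply negmul; lra. }
  assert (WT : W T <= 0) by (rewrite W0 in Hc; nra).
  unfold W in WT. pose proof (exp_pos ((-L) * T)).
  assert (VT : Vt T <= 0) by nra.
  unfold Vt, Vf in VT.
  pose proof (q_ge0 (H T)); pose proof (q_ge0 (K1 - H T)); pose proof (q_ge0 (S T));
  pose proof (q_ge0 (K2 - S T)); pose proof (q_ge0 (C T)); pose proof (q_ge0 (Kt - C T)).
  pose proof (q0 (H T)); pose proof (q0 (K1 - H T)); pose proof (q0 (S T));
  pose proof (q0 (K2 - S T)); pose proof (q0 (C T)); pose proof (q0 (Kt - C T)).
  unfold inD. repeat split; lra.
Qed.
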